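(* Let $(G,\boldsymbol{\gamma})$ be a reflection-$(2,2)$ graph with symmetric lift $(\tilde G,\varphi)$. Then for a generic assignment of directions $\vec d$, the reflection direction network $(\tilde G,\varphi,\vec d)$ has only collapsed realizations.
   Context: A colored graph $(G,\boldsymbol{\gamma})$ is a finite directed multigraph $G$ (self-loops and parallel edges allowed) with a color $\gamma_{ij}\in\mathbb{Z}/2\mathbb{Z}$ on each edge. $\rho:H_1(G,\mathbb{Z})\to\mathbb{Z}/2\mathbb{Z}$ sends a cycle to the sum of its edge colors; the $\rho$-image of a subgraph is the image of its cycles, trivial if $\{0\}$. For a subgraph $G'$: $n',m'$ are its numbers of vertices and edges, $c'$ (resp. $c'_0$) the number of its connected components with non-trivial (resp. trivial) $\rho$-image. $(G,\boldsymbol{\gamma})$ with $n$ vertices and $m$ edges is a reflection-$(2,2)$ graph if $m=2n-1$ and every subgraph satisfies $m'\le 2n'-c'-2c'_0$. The lift $(\tilde G,\varphi)$ has vertices $\tilde i_\gamma$ ($i\in V(G),\gamma\in\mathbb{Z}/2\mathbb{Z}$), edges $\tilde i_\gamma\tilde j_{\gamma+\gamma_{ij}}$ for each edge $ij$, and $\varphi(\tilde i_\gamma)=\tilde i_{\gamma+1}$. Let $\Phi(1)$ be the reflection $(x,y)\mapsto(-x,y)$ and $\Phi(0)$ the identity. A reflection direction network $(\tilde G,\varphi,\vec d)$ assigns a vector $\vec d_{ij}\in\mathbb{R}^2$ to each edge $ij$ of $G$; its realizations are point sets $\vec p_{\tilde i_\gamma}=\Phi(\gamma)\vec p_i$ determined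 by points $\vec p_i\in\mathbb{R}^2$ ($i\in V(G)$) satisfying $\langle\Phi(\gamma_{ij})\vec p_j-\vec p_i,\vec d_{ij}^\perp\rangle=0$ for all edges $ij$ of $G$, $\vec d^\perp$ denoting rotation by $\pi/2$. A realization is collapsed if all vertices of $\tilde G$ are at the same point. A property holds for generic directions if it holds for all $\vec d\in\mathbb{R}^{2m}$ outside a proper algebraic subset. *)

(* Defs.v *)
From HB Require Import structures.
From mathcomp Require Import all_boot all_order all_algebra.
From mathcomp Require Import mpoly.
From mathcomp Require Import reals.
From Stdlib Require Import ClassicalEpsilon.

Set Implicit Arguments.
Unset Strict Implicit.
Unset Printing Implicit Defensive.

Import GRing.Theory Num.Theory.
Local Open Scope ring_scope.

(* A colored graph with n vertices ('I_n) and m edges ('I_m): edge e goes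
   from [src e] to [tgt e] and has color [col e] in Z/2Z, encoded as bool
   (false = 0, true = 1, addition = xor). *)

Section ColoredGraph.
Variables (n m : nat) (src tgt : 'I_m -> 'I_n) (col : 'I_m -> bool).

Definition step_tail (s : 'I_m * bool) : 'I_n := if s.2 then src s.1 else tgt s.1.
Definition step_head (s : 'I_m * bool) : 'I_n := if s.2 then tgt s.1 else src s.1.

Fixpoint is_walk (x y : 'I_n) (w : seq ('I_m * bool)) : bool :=
  match w with
  | [::] => x == y
  | s :: w' => (step_tail s == x) && is_walk (step_head s) y w'
  end.

(* rho of a closed walk (its class in H_1): sum of the colors of its edges. *)
Definition walk_color (w : seq ('I_m * bool)) : bool :=
  foldr (fun s b => col s.1 (+) b) false w.

Definition is_subgraph (V' : {set 'I_n}) (E' : {set 'I_m}) : Prop :=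
  forall e, e \in E' -> (src e \in V') /\ (tgt e \in V').

Definition sadj (E' : {set 'I_m}) : rel 'I_n :=
  fun u v => [exists e in E', ((src e == u) && (tgt e == v))
                           || ((src e == v) && (tgt e == u))].

Definition components (V' : {set 'I_n}) (E' : {set 'I_m}) : {set {set 'I_n}} :=
  [set [set y | connect (sadj E') x y] | x in V'].

(* A component C of the subgraph with edges E' has trivial rho-image iff
   every cycle (closed walk in the subgraph based in C) has color sum 0. *)
Definition trivial_rho (E' : {set 'I_m}) (C : {set 'I_n}) : Prop :=
  forall x w, x \in C -> is_walk x x w -> all (fun s => s.1 \in E') w ->
    walk_color w = false.

Definition trivial_rhob (E' : {set 'I_m}) (C : {set 'I_n}) : bool :=
  if excluded_middle_informative (trivial_rho E' C) then true else false.

Definition c0 (V' : {set 'I_n}) (E' : {set 'I_m}) : nat :=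
  #|[set C in components V' E' | trivial_rhob E' C]|.
Definition c1 (V' : {set 'I_n}) (E' : {set 'I_m}) : nat :=
  #|[set C in components V' E' | ~~ trivial_rhob E' C]|.

(* reflection-(2,2) graph: m = 2n - 1 and m' <= 2n' - c' - 2c'_0 for every
   subgraph (the inequality is written additively to avoid nat truncation). *)
Definition reflection22 : Prop :=
  m.+1 = (2 * n)%N /\
  forall (V' : {set 'I_n}) (E' : {set 'I_m}), is_subgraph V' E' ->
    (#|E'| + c1 V' E' + 2 * c0 V' E' <= 2 * #|V'|)%N.

End ColoredGraph.

Section Realizations.
Variable R : realType.

Definition Phi (g : bool) (p : R * R) : R * R := if g then (- p.1, p.2) else p.

Definition perp (d : R * R) : R * R := (- d.2, d.1).

Definition dotR2 (u v : R * R) : R := u.1 * v.1 + u.2 * v.2.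

Variables (n m : nat) (src tgt : 'I_m -> 'I_n) (col : 'I_m -> bool).

(* p : 'I_n -> R^2 gives a realization of the reflection direction network
   with directions d : 'I_m -> R^2 (lifted points p_{i~_g} = Phi g (p i)). *)
Definition is_realization (d : 'I_m -> R * R) (p : 'I_n -> R * R) : Prop :=
  forall e, dotR2 (Phi (col e) (p (tgt e)) - p (src e)) (perp (d e)) = 0.

Definition lift_point (p : 'I_n -> R * R) (i : 'I_n) (g : bool) : R * R := Phi g (p i).

Definition collapsed (p : 'I_n -> R * R) : Prop :=
  forall i j g h, lift_point p i g = lift_point p j h.

Definition dirs_of (v : 'I_(m + m) -> R) : 'I_m -> R * R :=
  fun e => (v (lshift m e), v (rshift m e)).

(* a property of direction vectors holds generically: it holds outside the
   zero set of some nonzero polynomial in the 2m coordinates (every proper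
   algebraic subset of R^{2m} is contained in such a zero set). *)
Definition generic_dirs (P : ('I_m -> R * R) -> Prop) : Prop :=
  exists f : {mpoly R[m + m]}, f != 0 /\
    forall v : 'I_(m + m) -> R, f.@[v] != 0 -> P (dirs_of v).

End Realizations.

(* Main.v *)
Require Import Defs.
From HB Require Import structures.
From mathcomp Require Import all_boot all_order all_algebra.
From mathcomp Require Import mpoly.
From mathcomp Require Import reals.
From mathcomp Require Import zify.
From Stdlib Require Import ClassicalEpsilon.
Set Implicit Arguments. Unset Strict Implicit. Unset Printing Implicit Defensive.

Section Part.
Variable T : finType.

Definition rk_ax (r : {set T} -> nat) :=
  [/\ r set0 = 0,
      (forall A B : {set T}, A \subset B -> r A <= r B),
      (forall (A : {set T}) x, r (x |: A) <= (r A).+1) &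
      (forall A B : {set T}, r (A :|: B) + r (A :&: B) <= r A + r B)].

Definition contr (r : {set T} -> nat) (e : T) := fun A => r (e |: A) - r [set e].

Lemma rk_ax_contr r e : rk_ax r -> rk_ax (contr r e).
Proof.
case=> r0 rmon run rsub; rewrite /contr; split.
- by rewrite setU0 subnn.
- move=> A B AB; apply: leq_sub2r; apply: rmon; exact: setUS.
- move=> A x; have h1 := run (e |: A) x.
  have h2 : r [set e] <= r (e |: A) by apply: rmon; rewrite subsetUl.
  rewrite setUCA; lia.
- move=> A B.
  have h := rsub (e |: A) (e |: B).
  rewrite -setUUr -setUIr in h.
  have h1 : r [set e] <= r (e |: A) by apply: rmon; rewrite subsetUl.
  have h2 : r [set e] <= r (e |: B) by apply: rmon; rewrite subsetUl.
  have h3 : r [set e] <= r (e |: (A :|: B)) by apply: rmon; rewrite subsetUl.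
  have h4 : r [set e] <= r (e |: (A :&: B)) by apply: rmon; rewrite subsetUl.
  lia.
Qed.

Lemma rk_le1 r x : rk_ax r -> r [set x] <= 1.
Proof. by case=> r0 _ run _; have := run set0 x; rewrite setU0 r0. Qed.

Lemma rk_addU r A x : rk_ax r -> r (x |: A) <= r A + r [set x].
Proof.
case=> r0 rmon run rsub; have := rsub [set x] A.
by rewrite -/(x |: A); lia.
Qed.

Lemma partition_lemma (E : {set T}) (r1 r2 : {set T} -> nat) :
  rk_ax r1 -> rk_ax r2 ->
  (forall A : {set T}, A \subset E -> #|A| <= r1 A + r2 A) ->
  exists2 S : {set T}, S \subset E & r1 S = #|S| /\ r2 (E :\: S) = #|E :\: S|.
Proof.
move: {2}#|E| (leqnn #|E|) => k; elim: k E r1 r2 => [|k IH] E r1 r2.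
  rewrite leqn0 cards_eq0 => /eqP -> ax1 ax2 _.
  exists set0 => //; case: ax1 => -> _ _ _; case: ax2; rewrite setD0 cards0 => -> //.
move=> hk ax1 ax2 hyp.
case: (set_0Vmem E) => [E0|[e eE]].
  exists set0; first by rewrite E0.
  by rewrite E0 setD0 cards0; case: ax1 => -> _ _ _; case: ax2 => -> _ _ _.
set E' := E :\ e.
have eE' : e \notin E' by rewrite !inE eqxx.
have cE : #|E| = #|E'|.+1 by rewrite (cardsD1 e E) eE.
have hk' : #|E'| <= k by lia.
have E'E : E' \subset E by exact: subsetDl.
have subE (A : {set T}) : A \subset E' -> e |: A \subset E.
  by move=> AE; rewrite subUset sub1set eE (subset_trans AE E'E).
have ninA (A : {set T}) : A \subset E' -> e \notin A.
  by move=> AE; apply: contra eE' => /(subsetP AE).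
have opt1 : r1 [set e] = 1 ->
    (forall A : {set T}, A \subset E' -> #|A| <= contr r1 e A + r2 A) ->
    exists2 S : {set T}, S \subset E & r1 S = #|S| /\ r2 (E :\: S) = #|E :\: S|.
  move=> h1 hA.
  have [S' S'E [h1' h2']] := IH E' (contr r1 e) r2 hk' (rk_ax_contr e ax1) ax2 hA.
  exists (e |: S'); first exact: subE.
  have eS' := ninA _ S'E.
  have -> : E :\: (e |: S') = E' :\: S'.
    by apply/setP => x; rewrite !inE; case: (x == e); case: (x \in S'); case: (x \in E).
  split=> //; rewrite cardsU1 eS' -h1'; rewrite /contr h1.
  have : r1 [set e] <= r1 (e |: S') by case: ax1 => _ rmon _ _; apply: rmon; rewrite subsetUl.
  lia.
have opt2 : r2 [set e] = 1 ->
    (forall A : {set T}, A \subset E' -> #|A| <= r1 A + contr r2 e A) ->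
    exists2 S : {set T}, S \subset E & r1 S = #|S| /\ r2 (E :\: S) = #|E :\: S|.
  move=> h1 hA.
  have [S' S'E [h1' h2']] := IH E' r1 (contr r2 e) hk' ax1 (rk_ax_contr e ax2) hA.
  exists S'; first exact: subset_trans S'E E'E.
  have eS' := ninA _ S'E.
  have -> : E :\: S' = e |: (E' :\: S').
    apply/setP => x; rewrite !inE; case: eqP => [->|] //=; by rewrite eE (negbTE eS').
  split=> //; rewrite cardsU1 !inE eqxx /= -h2' /contr h1.
  have : r2 [set e] <= r2 (e |: (E' :\: S')) by case: ax2 => _ rmon _ _; apply: rmon; rewrite subsetUl.
  lia.
have hyp_e := hyp [set e]; rewrite sub1set eE cards1 in hyp_e.
have b1 := rk_le1 e ax1; have b2 := rk_le1 e ax2.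
have ax1' := ax1; have ax2' := ax2.
case: ax1' => _ mon1 _ sub1; case: ax2' => _ mon2 _ sub2.
have [z1|nz1] := eqVneq (r1 [set e]) 0.
  apply: opt2; first by lia.
  move=> A AE; have := hyp _ (subE _ AE); rewrite cardsU1 (ninA _ AE) /contr.
  have := rk_addU A e ax1; lia.
have [z2|nz2] := eqVneq (r2 [set e]) 0.
  apply: opt1; first by lia.
  move=> A AE; have := hyp _ (subE _ AE); rewrite cardsU1 (ninA _ AE) /contr.
  have := rk_addU A e ax2; lia.
have e1 : r1 [set e] = 1 by lia.
have e2 : r2 [set e] = 1 by lia.
case: (boolP [forall A : {set T}, (A \subset E') ==> (#|A| <= contr r1 e A + r2 A)]).
  move/forallP => hA; apply: opt1 => // A AE; exact: (implyP (hA A) AE).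
move/forallPn => [A]; rewrite negb_imply => /andP [AE fA].
apply: opt2 => // B BE; rewrite leqNgt; apply/negP => fB.
move: fA; rewrite -ltnNge /contr e1 => fA; move: fB; rewrite /contr e2 => fB.
have eA := ninA _ AE; have eB := ninA _ BE.
have hA := hyp _ (subset_trans AE E'E).
have hB := hyp _ (subset_trans BE E'E).
have AB : A :|: B \subset E' by rewrite subUset AE BE.
have hAB := hyp _ (subE _ AB).
have hIAB := hyp (A :&: B) (subset_trans (subsetIl _ _) (subset_trans AE E'E)).
have eAB := ninA _ AB.
rewrite cardsU1 eAB in hAB.
have m1 : r1 A <= r1 (e |: A) by apply: mon1; rewrite subsetUr.
have m2 : r2 B <= r2 (e |: B) by apply: mon2; rewrite subsetUr.
have me1 : r1 [set e] <= r1 (e |: A) by apply: mon1; rewrite subsetUl.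
have me2 : r2 [set e] <= r2 (e |: B) by apply: mon2; rewrite subsetUl.
have s1 := sub1 (e |: A) (A :|: B).
have s2 := sub2 (e |: B) (A :|: B).
have I1 : (e |: A) :&: (A :|: B) = A.
  apply/setP => x; rewrite !inE; case: (eqVneq x e) => [->|] /=.
    by rewrite (negbTE eA) (negbTE (ninA _ BE)).
  by case: (x \in A).
have I2 : (e |: B) :&: (A :|: B) = B.
  apply/setP => x; rewrite !inE; case: (eqVneq x e) => [->|] /=.
    by rewrite (negbTE eA) (negbTE eB).
  by case: (x \in A); case: (x \in B).
have U1 : (e |: A) :|: (A :|: B) = e |: (A :|: B).
  by rewrite -setUA (setUA A A) setUid.
have U2 : (e |: B) :|: (A :|: B) = e |: (A :|: B).
  by rewrite -setUA (setUC A B) (setUA B B) setUid.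
rewrite I1 U1 in s1; rewrite I2 U2 in s2.
have t1 := sub1 A B; have t2 := sub2 A B.
have cUI := cardsUI A B.
lia.
Qed.

End Part.

Import GRing.Theory Num.Theory.
Local Open Scope ring_scope.

Section Lin.
Variable R : fieldType.
Variables (m n : nat).

Definition spanF (F : 'I_m -> 'rV[R]_n) (A : {set 'I_m}) : 'M[R]_(m, n) :=
  \matrix_(e, j) (if e \in A then F e 0 j else 0).

Definition rk F A := \rank (spanF F A).

Lemma row_spanF F A e : row e (spanF F A) = if e \in A then F e else 0.
Proof. by apply/rowP => j; rewrite !mxE; case: ifP => _; rewrite ?mxE. Qed.

Lemma spanF_sub F (A B : {set 'I_m}) : A \subset B -> (spanF F A <= spanF F B)%MS.
Proof.
move=> AB; apply/row_subP => e; rewrite row_spanF; case: ifP => eA.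
  by have := row_sub e (spanF F B); rewrite row_spanF (subsetP AB _ eA).
by rewrite sub0mx.
Qed.

Lemma rk_axF F : rk_ax (rk F).
Proof.
split.
- rewrite /rk; have -> : spanF F set0 = 0 by apply/matrixP => i j; rewrite !mxE inE.
  exact: mxrank0.
- by move=> A B AB; apply: mxrankS; apply: spanF_sub.
- move=> A x; rewrite /rk.
  have h : (spanF F (x |: A) <= spanF F A + F x)%MS.
    apply/row_subP => e; rewrite row_spanF; case: ifP => eA; last by rewrite sub0mx.
    move: eA; rewrite !inE; case: eqP => [-> _|_ /= eA]; first exact: addsmxSr.
    apply: submx_trans (addsmxSl _ _); have := row_sub e (spanF F A); by rewrite row_spanF eA.
  apply: leq_trans (mxrankS h) _.
  apply: leq_trans (mxrank_adds_leqif _ _).1 _.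
  by rewrite -(addn1 (\rank (spanF F A))) leq_add2l rank_leq_row.
- move=> A B; rewrite /rk.
  rewrite -(mxrank_sum_cap (spanF F A) (spanF F B)) leq_add //; apply: mxrankS.
    apply/row_subP => e; rewrite row_spanF; case: ifP => eA; last by rewrite sub0mx.
    move: eA; rewrite inE => /orP [eA|eB].
      apply: submx_trans (addsmxSl _ _); have := row_sub e (spanF F A); by rewrite row_spanF eA.
    apply: submx_trans (addsmxSr _ _); have := row_sub e (spanF F B); by rewrite row_spanF eB.
  by rewrite sub_capmx !spanF_sub // ?subsetIl ?subsetIr.
Qed.

Lemma full_rank_ker k (A : 'M[R]_(k, n)) (c : 'cV[R]_n) :
  \rank A = n -> A *m c = 0 -> c = 0.
Proof.
move=> rA Ac; have : row_full A by rewrite /row_full rA.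
case/row_fullP => B BA.
by rewrite -(mul1mx c) -BA -mulmxA Ac mulmx0.
Qed.

Lemma rank_ker_bound k (W : 'M[R]_(k, n)) (P : {set 'I_n}) :
  (forall u : 'rV[R]_n, u *m W^T = 0 -> (forall p, p \in P -> u 0 p = 0) -> u = 0) ->
  (n <= \rank W + #|P|)%N.
Proof.
move=> hyp.
set K := kermx W^T.
have rK : \rank K = (n - \rank W)%N by rewrite mxrank_ker mxrank_tr.
pose Sel : 'M[R]_(n, #|P|) := \matrix_(j, l) (j == enum_val l)%:R.
have := mxrank_mul_ker K Sel.
have -> : (K :&: kermx Sel)%MS = 0.
  apply/row_matrixP => i; rewrite row0.
  set u := row i _.
  have uK : (u <= K)%MS by apply: submx_trans (row_sub _ _) (capmxSl _ _).
  have uS : (u <= kermx Sel)%MS by apply: submx_trans (row_sub _ _) (capmxSr _ _).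
  apply: hyp; first exact/sub_kermxP.
  move=> p pP; move/sub_kermxP: uS => /rowP /(_ (enum_rank_in pP p)).
  rewrite [in X in X -> _]mxE (bigD1 p) //= /Sel !mxE enum_rankK_in // eqxx mulr1 big1 ?addr0 //.
  by move=> j /negbTE jp; rewrite !mxE enum_rankK_in // jp mulr0.
rewrite mxrank0 addn0 => eK.
have := rank_leq_col (K *m Sel); rewrite eK rK.
have := rank_leq_col W; lia.
Qed.

End Lin.

Lemma connect_eq (T : finType) (U : Type) (e : rel T) (g : T -> U) :
  (forall a b, e a b -> g a = g b) -> forall a b, connect e a b -> g a = g b.
Proof.
move=> h a b /connectP [p pth ->]; elim: p a pth => //= c p IH a /andP [eac pc].
by rewrite (h _ _ eac); exact: IH.
Qed.

Section Graph.
Variable R : numFieldType.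
Variables (n m : nat) (src tgt : 'I_m -> 'I_n) (col : 'I_m -> bool).

Definition sg e : R := if col e then -1 else 1.
Definition Xv e : 'rV[R]_n := \row_j (sg e * (j == tgt e)%:R - (j == src e)%:R).
Definition Yv e : 'rV[R]_n := \row_j ((j == tgt e)%:R - (j == src e)%:R).

Lemma sum_ind (f : 'I_n -> R) t : \sum_j f j * (j == t)%:R = f t.
Proof.
rewrite (bigD1 t) //= eqxx mulr1 big1 ?addr0 // => i /negbTE ->; by rewrite mulr0.
Qed.

Lemma kerT (F : 'I_m -> 'rV[R]_n) A (u : 'rV[R]_n) :
  u *m (spanF F A)^T = 0 -> forall e, e \in A -> \sum_j u 0 j * F e 0 j = 0.
Proof.
move/rowP => h e eA; transitivity ((u *m (spanF F A)^T) 0 e); last by rewrite h mxE.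
by rewrite mxE; apply: eq_bigr => j _; rewrite !mxE eA.
Qed.

Lemma kerY (A : {set 'I_m}) (u : 'rV[R]_n) e : u *m (spanF Yv A)^T = 0 -> e \in A -> u 0 (tgt e) = u 0 (src e).
Proof.
move=> h eA; have := kerT h eA.
under eq_bigr => j _ do rewrite mxE mulrBr.
by rewrite sumrB !sum_ind => /eqP; rewrite subr_eq0 => /eqP.
Qed.

Lemma kerX (A : {set 'I_m}) (u : 'rV[R]_n) e : u *m (spanF Xv A)^T = 0 -> e \in A -> u 0 (src e) = sg e * u 0 (tgt e).
Proof.
move=> h eA; have := kerT h eA.
under eq_bigr => j _ do rewrite mxE mulrBr mulrCA.
rewrite sumrB -mulr_sumr !sum_ind => /eqP; rewrite subr_eq0 => /eqP <-; by rewrite mulrC.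
Qed.

Lemma sg2 e : sg e * sg e = 1.
Proof. by rewrite /sg; case: (col e); rewrite ?mulrNN mulr1. Qed.

Lemma walk_sign (A : {set 'I_m}) (u : 'rV[R]_n) :
  (forall e, e \in A -> u 0 (src e) = sg e * u 0 (tgt e)) ->
  forall w x y, is_walk src tgt x y w -> all (fun s => s.1 \in A) w ->
  u 0 y = if walk_color col w then - u 0 x else u 0 x.
Proof.
move=> hA; elim => [|s w IH] x y /=; first by move/eqP ->.
case/andP => /eqP tx wk /andP [sA wA].
rewrite (IH _ _ wk wA).
have hs : u 0 (step_head src tgt s) = sg s.1 * u 0 x.
  rewrite -tx /step_head /step_tail; case: s sA {tx wk} => e [] /= eA.
    by rewrite (hA _ eA) mulrA sg2 mul1r.
  by rewrite (hA _ eA).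
rewrite hs /sg; case: (col s.1); case: (walk_color col w) => /=;
  by rewrite ?mulN1r ?mul1r ?opprK.
Qed.

Definition rep (i0 : 'I_n) (K : {set 'I_n}) := if [pick x in K] is Some x then x else i0.

Lemma rep_in i0 K : K != set0 -> rep i0 K \in K.
Proof.
rewrite /rep; case: pickP => // h; case/set0Pn => x; by rewrite h.
Qed.

Definition cls A v : {set 'I_n} := [set y | connect (sadj src tgt A) v y].

Lemma cls_comp A v : cls A v \in components src tgt setT A.
Proof. by apply: imset_f; rewrite inE. Qed.

Lemma rep_cls i0 A v : connect (sadj src tgt A) v (rep i0 (cls A v)).
Proof.
have : rep i0 (cls A v) \in cls A v.
  apply: rep_in; apply/set0Pn; exists v; by rewrite inE connect0.
by rewrite inE.
Qed.

Lemma sadj_eq (U : Type) (A : {set 'I_m}) (g : 'I_n -> U) :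
  (forall e, e \in A -> g (src e) = g (tgt e)) ->
  forall a b, sadj src tgt A a b -> g a = g b.
Proof.
move=> h a b /existsP [e /andP [eA /orP [/andP [/eqP <- /eqP <-]|/andP [/eqP <- /eqP <-]]]];
  by rewrite h.
Qed.

Lemma comps_card A :
  #|components src tgt setT A| = (c0 src tgt col setT A + c1 src tgt col setT A)%N.
Proof.
rewrite /c0 /c1 -(cardsID [set C | trivial_rhob src tgt col A C] (components src tgt setT A)).
congr (_ + _)%N; apply: eq_card => C; rewrite !inE //; by rewrite andbC.
Qed.

Lemma Ylow (i0 : 'I_n) (A : {set 'I_m}) : (n <= rk Yv A + #|components src tgt setT A|)%N.
Proof.
apply: leq_trans (rank_ker_bound (W := spanF Yv A) (P := [set rep i0 K | K in components src tgt setT A]) _) _.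
  move=> u hu hP; apply/rowP => v; rewrite mxE.
  have := connect_eq (sadj_eq (g := fun a => u 0 a) _) (rep_cls i0 A v).
  move=> ->; first by apply: hP; apply: imset_f; exact: cls_comp.
  by move=> e eA /=; rewrite (kerY hu eA).
by rewrite leq_add2l leq_imset_card.
Qed.

Lemma Xlow (i0 : 'I_n) (A : {set 'I_m}) : (n <= rk Xv A + c0 src tgt col setT A)%N.
Proof.
apply: leq_trans (rank_ker_bound (W := spanF Xv A)
  (P := [set rep i0 K | K in [set C in components src tgt setT A | trivial_rhob src tgt col A C]]) _) _;
  last by rewrite leq_add2l leq_imset_card.
move=> u hu hP; apply/rowP => v; rewrite mxE.
have hA : forall e, e \in A -> u 0 (src e) = sg e * u 0 (tgt e) by move=> e; exact: kerX.
have hn : forall a b, connect (sadj src tgt A) a b -> `|u 0 a| = `|u 0 b|.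
  apply: connect_eq; apply: sadj_eq => e eA; rewrite hA // normrM /sg.
  by case: (col e); rewrite ?normrN normr1 mul1r.
apply/eqP; apply: contraT => uv.
have triv : trivial_rho src tgt col A (cls A v).
  move=> x w; rewrite inE => vx wk wA; apply: contraTF uv => cw.
  have := walk_sign hA wk wA; rewrite cw => /eqP; rewrite -addr_eq0 -mulr2n mulrn_eq0 /=.
  by move=> ux; rewrite negbK -normr_eq0 (hn _ _ vx) normr_eq0.
have : u 0 (rep i0 (cls A v)) = 0.
  apply: hP; apply: imset_f; rewrite inE cls_comp /trivial_rhob /=.
  by case: excluded_middle_informative.
by move/eqP; rewrite -normr_eq0 -(hn _ _ (rep_cls i0 A v)) normr_eq0 (negbTE uv).
Qed.

End Graph.

Lemma split_l (a b : nat) (i : 'I_a) : split (lshift b i) = inl i.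
Proof. exact: (unsplitK (inl _ i)). Qed.
Lemma split_r (a b : nat) (i : 'I_b) : split (rshift a i) = inr i.
Proof. exact: (unsplitK (inr _ i)). Qed.

Lemma realE (R : realType) (g : bool) (pt ps d : R * R) :
  dotR2 (Phi g pt - ps) (perp d) =
  ((if g then - pt.1 else pt.1) - ps.1) * - d.2 + (pt.2 - ps.2) * d.1.
Proof. by case: g. Qed.

Section Final.
Variable R : realType.
Variables (n m : nat) (src tgt : 'I_m -> 'I_n) (col : 'I_m -> bool).
Variable hmn : (n + n = m.+1)%N.
Variable i0 : 'I_n.

Definition decode (k : 'I_(n + n)) : option 'I_m := unlift ord_max (cast_ord hmn k).

Lemma decode_e e : decode (cast_ord (esym hmn) (lift ord_max e)) = Some e.
Proof. by rewrite /decode cast_ordKV liftK. Qed.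
Lemma decode_n : decode (cast_ord (esym hmn) ord_max) = None.
Proof. by rewrite /decode cast_ordKV unlift_none. Qed.

Definition coef (Rg : comNzRingType) (dd : 'I_m -> Rg * Rg) (j k : 'I_(n + n)) : Rg :=
  match decode k with
  | Some e => match split j with
     | inl i => - (dd e).2 * ((if col e then -1 else 1) * (i == tgt e)%:R - (i == src e)%:R)
     | inr i => (dd e).1 * ((i == tgt e)%:R - (i == src e)%:R)
     end
  | None => match split j with inl _ => 0 | inr i => (i == i0)%:R end
  end.

Definition NT (Rg : comNzRingType) (dd : 'I_m -> Rg * Rg) : 'M[Rg]_(n + n) :=
  \matrix_(j, k) coef dd j k.

Definition ddX : 'I_m -> {mpoly R[m + m]} * {mpoly R[m + m]} :=
  fun e => ('X_(lshift m e), 'X_(rshift m e)).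

Lemma map_NT (v : 'I_(m + m) -> R) :
  map_mx (meval v) (NT ddX) = NT (dirs_of v).
Proof.
apply/matrixP => j k; rewrite !mxE /coef.
case: (decode k) => [e|]; case: (split j) => i;
  rewrite ?rmorph0 ?rmorph_nat //= ?rmorphM ?rmorphN ?rmorphB ?rmorph_nat /= ?mevalXU //.
by case: (col e); rewrite ?rmorphM ?rmorphN ?rmorph1 ?rmorph_nat.
Qed.

Definition qv (v : 'rV[R]_(n + n)) (i : 'I_n) : R * R := (v 0 (lshift n i), v 0 (rshift n i)).

Lemma sum_ind' (f : 'I_n -> R) t : \sum_j f j * (j == t)%:R = f t.
Proof.
rewrite (bigD1 t) //= eqxx mulr1 big1 ?addr0 // => i /negbTE ->; by rewrite mulr0.
Qed.

Lemma NT_eq (dd : 'I_m -> R * R) v k : (v *m NT dd) 0 k =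
  match decode k with
  | Some e => dotR2 (Phi (col e) (qv v (tgt e)) - qv v (src e)) (perp (dd e))
  | None => (qv v i0).2
  end.
Proof.
rewrite mxE big_split_ord /=.
under eq_bigr => i _ do rewrite mxE /coef split_l.
under [X in _ + X]eq_bigr => i _ do rewrite mxE /coef split_r.
case: (decode k) => [e|].
  rewrite realE /qv /=.
  under eq_bigr => i _ do rewrite mulrCA mulrBr mulrCA.
  under [X in _ + X]eq_bigr => i _ do rewrite mulrCA mulrBr.
  rewrite -!mulr_sumr !sumrB -!mulr_sumr !sum_ind'.
  by case: (col e); rewrite ?mulN1r ?mul1r; rewrite mulrC [in X in _ + X]mulrC.
by rewrite big1 ?add0r ?sum_ind' // => i _; rewrite mulr0.
Qed.


Lemma NT_real (dd : 'I_m -> R * R) v :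
  v *m NT dd = 0 <->
  (is_realization src tgt col dd (qv v) /\ (qv v i0).2 = 0).
Proof.
split.
  move/rowP => h; split.
    move=> e; have := h (cast_ord (esym hmn) (lift ord_max e)).
    by rewrite NT_eq decode_e mxE.
  by have := h (cast_ord (esym hmn) ord_max); rewrite NT_eq decode_n mxE.
case=> hr h0; apply/rowP => k; rewrite NT_eq mxE.
by case: (decode k) => [e|] //; apply: hr.
Qed.

Lemma det_collapsed (dd : 'I_m -> R * R) : \det (NT dd) != 0 ->
  forall p, is_realization src tgt col dd p -> collapsed p.
Proof.
move=> hdet p hp.
set c := (p i0).2.
pose v : 'rV[R]_(n + n) := \row_j match split j with
   inl i => (p i).1 | inr i => (p i).2 - c end.
have hv : v *m NT dd = 0.
  apply/NT_real; split; last by rewrite /qv /= mxE split_r subrr.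
  move=> e; have := hp e; rewrite !realE /qv /= !mxE !split_l !split_r.
  by move=> <-; congr (_ + _); congr (_ * _); rewrite opprB addrA subrK.
have v0 : v = 0.
  apply/eqP; apply: contraR hdet => vnz; apply/det0P; by exists v.
have pi i : p i = (0, c).
  have h1 := congr1 (fun w : 'rV[R]_(n + n) => w 0 (lshift n i)) v0.
  have h2 := congr1 (fun w : 'rV[R]_(n + n) => w 0 (rshift n i)) v0.
  move: h1 h2; rewrite /= !mxE split_l split_r => h1 /eqP; rewrite subr_eq0 => /eqP h2.
  by rewrite [p i]surjective_pairing h1 h2.
move=> i j g h; rewrite /lift_point !pi.
by case: g; case: h; rewrite /Phi /= ?oppr0.
Qed.


Lemma sum_ind1 t : \sum_(j < n) (j == t)%:R = 1 :> R.
Proof. rewrite -[RHS](sum_ind' (fun _ => 1) t); apply: eq_bigr => j _ /=; by rewrite mul1r. Qed.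

Notation XX := (Xv R src tgt col).
Notation YY := (Yv R src tgt).

Lemma Yones (T : {set 'I_m}) : spanF YY T *m (const_mx 1 : 'cV[R]_n) = 0.
Proof.
apply/matrixP => e z; rewrite !mxE.
case: (boolP (e \in T)) => eT.
  under eq_bigr => j _ do rewrite !mxE eT mulr1.
  by rewrite sumrB !sum_ind1 subrr.
by rewrite big1 // => j _; rewrite !mxE (negbTE eT) mul0r.
Qed.

Lemma inj_star (S : {set 'I_m}) (dd : 'I_m -> R * R) :
  \rank (spanF XX S) = n -> \rank (spanF YY (~: S)) = n.-1 ->
  (forall e, dd e = if e \in S then (0, 1) else (1, 0)) -> \det (NT dd) != 0.
Proof.
move=> rX rY hd; apply/negP => /det0P [v vnz /NT_real [hr h0]].
have npos : (0 < n)%N by apply: leq_ltn_trans (ltn_ord i0).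
pose xv : 'cV[R]_n := \col_i (qv v i).1.
pose yv : 'cV[R]_n := \col_i (qv v i).2.
have hX : spanF XX S *m xv = 0.
  apply/matrixP => e z; rewrite !mxE.
  case: (boolP (e \in S)) => eS; last first.
    by rewrite big1 // => j _; rewrite !mxE (negbTE eS) mul0r.
  have := hr e; rewrite realE hd eS /= mulr0 addr0 mulrN1 => /eqP; rewrite oppr_eq0 => /eqP H.
  under eq_bigr => j _ do rewrite !mxE eS mulrBl mulrAC [_%:R * _]mulrC.
  rewrite sumrB !sum_ind' -H /sg; by case: (col e); rewrite ?mulN1r ?mul1r.
have hY : spanF YY (~: S) *m yv = 0.
  apply/matrixP => e z; rewrite !mxE.
  case: (boolP (e \in ~: S)) => eS; last first.
    by rewrite big1 // => j _; rewrite !mxE (negbTE eS) mul0r.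
  move: (eS); rewrite inE => eS'.
  have := hr e; rewrite realE hd (negbTE eS') /= oppr0 mulr0 add0r mulr1 => H.
  under eq_bigr => j _ do rewrite !mxE eS mulrBl [_%:R * _]mulrC [_%:R * _]mulrC.
  by rewrite sumrB !sum_ind'.
have x0 : xv = 0 by apply: (full_rank_ker rX hX).
pose dl : 'rV[R]_n := \row_j (j == i0)%:R.
have notin : ~~ (dl <= spanF YY (~: S))%MS.
  apply/negP => /submxP [D hD].
  have : dl *m (const_mx 1 : 'cV[R]_n) = 0 by rewrite hD -mulmxA Yones mulmx0.
  move/matrixP => /(_ 0 0); rewrite !mxE.
  under eq_bigr => j _ do rewrite !mxE mulr1.
  by rewrite sum_ind1 => /eqP; rewrite oner_eq0.
have rW : \rank (col_mx (spanF YY (~: S)) dl) = n.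
  rewrite -(addsmxE (spanF YY (~: S)) dl).1; apply/eqP; rewrite eqn_leq rank_leq_col /=.
  have lt : (spanF YY (~: S) < spanF YY (~: S) + dl)%MS.
    rewrite ltmxE addsmxSl /=; apply: contra notin => h.
    exact: submx_trans (addsmxSr _ _) h.
  have := rank_ltmx lt; rewrite rY; lia.
have y0 : yv = 0.
  apply: (full_rank_ker rW); rewrite mul_col_mx hY.
  have -> : dl *m yv = 0.
    apply/matrixP => a b; rewrite !mxE (ord1 a) (ord1 b).
    under eq_bigr => j _ do rewrite !mxE mulrC.
    by rewrite sum_ind' -h0 /qv /=.
  by rewrite col_mx0.
move/negP: vnz; apply; apply/eqP/rowP => j; rewrite mxE -(splitK j).
case: (split j) => i /=.
  by have := congr1 (fun w : 'cV[R]_n => w i 0) x0; rewrite !mxE /qv.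
by have := congr1 (fun w : 'cV[R]_n => w i 0) y0; rewrite !mxE /qv.
Qed.

End Final.

Theorem proposition8 (R : realType) (n m : nat) (src tgt : 'I_m -> 'I_n)
    (col : 'I_m -> bool) :
  reflection22 src tgt col ->
  generic_dirs (fun d : 'I_m -> R * R =>
    forall p : 'I_n -> R * R, is_realization src tgt col d p -> collapsed p).
Proof.
case=> hm hsub.
have hmn : (n + n = m.+1)%N by rewrite hm addnn -mul2n.
have npos : (0 < n)%N by lia.
pose i0 : 'I_n := Ordinal npos.
have cnt : forall A : {set 'I_m},
    (#|A| <= rk (Xv R src tgt col) A + rk (Yv R src tgt) A)%N.
  move=> A; have h := hsub setT A (fun e _ => conj (in_setT _) (in_setT _)).
  have hx := Xlow R src tgt col i0 A; have hy := Ylow R src tgt i0 A.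
  rewrite (comps_card src tgt col) in hy; rewrite cardsT card_ord in h.
  lia.
have [S _ [h1 h2]] := partition_lemma (E := setT) (rk_axF (Xv R src tgt col))
  (rk_axF (Yv R src tgt)) (fun A _ => cnt A).
rewrite setTD in h2.
have cS : (#|S| + #|~: S| = m)%N by rewrite cardsC card_ord.
have bX : (rk (Xv R src tgt col) S <= n)%N by apply: rank_leq_col.
have bY : (rk (Yv R src tgt) (~: S) <= n)%N by apply: rank_leq_col.
have nY : rk (Yv R src tgt) (~: S) != n.
  apply/eqP => e; have := full_rank_ker e (Yones R src tgt (~: S)).
  move/matrixP => /(_ i0 0); rewrite !mxE => /eqP; by rewrite oner_eq0.
have rX : \rank (spanF (Xv R src tgt col) S) = n by rewrite -/(rk _ _); lia.
have rY : \rank (spanF (Yv R src tgt) (~: S)) = n.-1 by rewrite -/(rk _ _); lia.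
pose dstar (e : 'I_m) : R * R := if e \in S then (0, 1) else (1, 0).
pose vstar (k : 'I_(m + m)) : R :=
  match split k with inl e => (dstar e).1 | inr e => (dstar e).2 end.
have hd : forall e, dirs_of vstar e = if e \in S then (0, 1) else (1, 0).
  by move=> e; rewrite /dirs_of /vstar split_l split_r /dstar; case: (e \in S).
have dst := inj_star hmn i0 rX rY hd.
exists (\det (NT src tgt col hmn i0 (ddX R (m := m)))); split.
  apply: contra dst => /eqP f0.
  by rewrite -map_NT det_map_mx f0 rmorph0.
move=> v hv; apply: (det_collapsed (hmn := hmn) (i0 := i0)); by rewrite -map_NT det_map_mx.
Qed.
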